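(* Let $\boldsymbol{\Sigma}\in\mathbb{R}^{d\times d}$ be a symmetric positive semidefinite matrix with eigenvalues $\lambda_1^\star\ge\lambda_2^\star\ge\dots\ge\lambda_d^\star$ and corresponding orthonormal eigenvectors $\mathbf{u}_1^\star,\dots,\mathbf{u}_d^\star$, and assume $1=\lambda_1^\star>\lambda_2^\star>\cdots$. Let $k\in\{1,\dots,d-1\}$, let $\mathbf{v}_{1,\ell-1},\dots,\mathbf{v}_{k-1,\ell-1}\in\mathbb{R}^d$ be unit vectors, define $$\boldsymbol{\Sigma}_{k,\ell}=\boldsymbol{\Sigma}-\sum_{k'=1}^{k-1}\big(\mathbf{v}_{k',\ell-1}^\top\boldsymbol{\Sigma}\mathbf{v}_{k',\ell-1}\big)\mathbf{v}_{k',\ell-1}\mathbf{v}_{k',\ell-1}^\top,$$ and let $\mathbf{u}_{k,\ell}$ denote the (unit-norm) top eigenvector of $\boldsymbol{\Sigma}_{k,\ell}$. If for some $c_0>1$ $$\sum_{k'=1}^{k-1}\lambda_{k'}^\star\|\mathbf{u}_{k'}^\star-\mathbf{v}_{k',\ell-1}\|_2\le\frac{c_0-1}{4c_0}\big(\lambda_k^\star-\lambda_{k+1}^\star\big),$$ then $$\|\mathbf{u}_{k,\ell}-\mathbf{u}_k^\star\|_2\le\frac{4c_0}{\lambda_k^\star-\lambda_{k+1}^\star}\sum_{k'=1}^{k-1}\lambda_{k'}^\star\|\mathbf{u}_{k'}^\star-\mathbf{v}_{k',\ell-1}\|_2 .$$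
   Context: The vectors $\mathbf{v}_{k',\ell-1}$ play the role of the current estimates (from communication round $\ell-1$) of the first $k-1$ eigenvectors in a parallel deflation scheme; $\boldsymbol{\Sigma}_{k,\ell}$ is the corresponding deflated matrix. The top eigenvector of a symmetric matrix is a unit eigenvector for its largest eigenvalue. *)

(* Defs.v *)
From HB Require Import structures.
From mathcomp Require Import all_boot all_order all_algebra.
Set Implicit Arguments. Unset Strict Implicit. Unset Printing Implicit Defensive.
Import Order.TTheory GRing.Theory Num.Theory.
Local Open Scope ring_scope.

Definition norm2 {R : rcfType} {d : nat} (x : 'cV[R]_d) : R :=
  Num.sqrt (\sum_(i < d) x i 0 ^+ 2).

Definition qform {R : rcfType} {d : nat} (A : 'M[R]_d) (x : 'cV[R]_d) : R :=
  (x^T *m A *m x) 0 0.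

(* Deflated matrix Sigma_{k,l} = Sigma - sum_{k'<k} (v_k'^T Sigma v_k') v_k' v_k'^T
   (0-based indices k' = 0..k-1). *)
Definition deflate {R : rcfType} {d : nat} (S : 'M[R]_d) (v : nat -> 'cV[R]_d)
  (k : nat) : 'M[R]_d :=
  S - \sum_(k' < k) (qform S (v k') *: (v k' *m (v k')^T)).

Definition is_top_eigvec {R : rcfType} {d : nat} (A : 'M[R]_d) (u : 'cV[R]_d) : Prop :=
  norm2 u = 1 /\
  exists mu : R, A *m u = mu *: u /\
    (forall (mu' : R) (w : 'cV[R]_d), w != 0 -> A *m w = mu' *: w -> mu' <= mu).

(* Main.v *)
Require Import Defs.
From HB Require Import structures.
From mathcomp Require Import all_boot all_order all_algebra.
From mathcomp Require Import complex.
From mathcomp Require Import ring lra zify.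
Set Implicit Arguments. Unset Strict Implicit. Unset Printing Implicit Defensive.
Import Order.TTheory GRing.Theory Num.Theory.
Local Open Scope ring_scope.

(* Proof outline:
   - spectral theorem (via R[i] and mathcomp's spectral.v) gives a Rayleigh
     principle for the symmetric deflated matrix A, hence mu >= lam_k
     (test vector in span(e_0..e_k) orthogonal to all v_j);
   - quadratic-form inequality then bounds the components of u off e_k. *)

Section SpecS.
Local Open Scope sesquilinear_scope.
Variable R : rcfType.
Local Notation C := (R[i]).
Local Notation toC := (real_complex R).
Local Notation cRe := (@complex.Re R).
Local Notation cIm := (@complex.Im R).

Lemma toC_real (a : R) : toC a \is Num.real.
Proof. by apply/complex_realP; exists a. Qed.

Lemma toC_conj (a : R) : (toC a)^* = toC a.
Proof. exact/conj_Creal/toC_real. Qed.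

Lemma Re_sum (I : Type) (r : seq I) (P : pred I) (F : I -> C) :
  cRe (\sum_(i <- r | P i) F i) = \sum_(i <- r | P i) cRe (F i).
Proof.
apply: (big_rec2 (fun a b => cRe b = a)) => // i a b _ <-.
by case: (F i); case: b.
Qed.

Lemma Im_sum (I : Type) (r : seq I) (P : pred I) (F : I -> C) :
  cIm (\sum_(i <- r | P i) F i) = \sum_(i <- r | P i) cIm (F i).
Proof.
apply: (big_rec2 (fun a b => cIm b = a)) => // i a b _ <-.
by case: (F i); case: b.
Qed.

Lemma Re_mulR (z : C) (a : R) : cRe (z * toC a) = cRe z * a.
Proof. by case: z => p q /=; rewrite mulr0 subr0. Qed.

Lemma Im_mulR (z : C) (a : R) : cIm (z * toC a) = cIm z * a.
Proof. by case: z => p q /=; rewrite mulr0 add0r. Qed.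

Lemma Re_Rmul (z : C) (a : R) : cRe (toC a * z) = a * cRe z.
Proof. by rewrite mulrC Re_mulR mulrC. Qed.

Lemma Im_Rmul (z : C) (a : R) : cIm (toC a * z) = a * cIm z.
Proof. by rewrite mulrC Im_mulR mulrC. Qed.

Lemma rayleigh n (A : 'M[R]_n.+1) : A^T = A ->
  exists m (w : 'cV[R]_n.+1), w != 0 /\ A *m w = m *: w /\
    forall x : 'cV[R]_n.+1, (x^T *m A *m x) 0 0 <= m * (x^T *m x) 0 0.
Proof.
move=> HA.
pose Ac := map_mx toC A.
have Asym : Ac \is symmetricmx.
  apply/is_hermitianmxP; rewrite expr0 scale1r map_mx_id // /Ac map_trmx HA //.
have Areal : Ac \is a realmx.
  by apply/mxOverP => i j; rewrite mxE toC_real.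
have Aherm := realsym_hermsym Asym Areal.
have /orthomx_spectralP Aeq := hermitian_normalmx Aherm.
set P := spectralmx Ac in Aeq; set D := spectral_diag Ac in Aeq.
have Pu : P \is unitarymx := spectral_unitarymx Ac.
have Dreal : D \is a realmx := hermitian_spectral_diag_real Aherm.
have PPt : P *m P^t* = 1%:M by apply/unitarymxP.
have PtP : P^t* *m P = 1%:M by apply: mulmx1C.
pose j0 := Order.arg_max (ord0 : 'I_n.+1) xpredT (fun j => cRe (D 0 j)).
pose m := cRe (D 0 j0).
have Dj j : D 0 j = toC (cRe (D 0 j)).
  by rewrite RRe_real //; apply: (mxOverP Dreal).
have Djm j : cRe (D 0 j) <= m.
  rewrite /m /j0; case: arg_maxP => // i _ Hi; exact: Hi.
have Acdef : Ac = P^t* *m diag_mx D *m P by rewrite {1}Aeq invmx_unitary.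
have ctmul p q r (X : 'M[C]_(p,q)) (Y : 'M[C]_(q,r)) : (X *m Y)^t* = Y^t* *m X^t*.
  by rewrite trmx_mul map_mxM.
have ray : forall x : 'cV[R]_n.+1, (x^T *m A *m x) 0 0 <= m * (x^T *m x) 0 0.
  move=> x.
  pose xr := (x^T) ^ toC.
  have xrc : xr^t* = xr^T.
    by apply/matrixP => i j; rewrite !mxE toC_conj.
  have xT : x ^ toC = xr^T by rewrite /xr map_trmx trmxK.
  have mC : forall M : 'M[R]_1, toC (M 0 0) = (M ^ toC) 0 0 by move=> M; rewrite mxE.
  pose y := xr *m P^t*.
  have yc : y^t* = P *m xr^T by rewrite /y ctmul trmxCK xrc.
  have e1 : toC ((x^T *m A *m x) 0 0) = (y *m diag_mx D *m y^t*) 0 0.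
    rewrite mC !map_mxM xT -/Ac Acdef yc /y !mulmxA //.
  have e2 : toC ((x^T *m x) 0 0) = (y *m y^t*) 0 0.
    rewrite mC !map_mxM xT yc /y -!mulmxA (mulmxA (P^t*)) PtP mul1mx //.
  rewrite -lecR rmorphM /= e1 e2 mul_mx_diag !mxE mulr_sumr.
  apply: ler_sum => j _; rewrite !mxE.
  rewrite mulrAC [_ * D 0 j]mulrC mulrA -mulrA [X in X <= _]mulrC.
  rewrite [X in _ <= X]mulrC.
  apply: ler_wpM2l; first exact: mul_conjC_ge0.
  by rewrite Dj lecR Djm.
have PA : P *m Ac = diag_mx D *m P.
  by rewrite Acdef !mulmxA PPt mul1mx.
pose z := row j0 P.
have zA : z *m Ac = D 0 j0 *: z.
  rewrite /z -row_mul PA mul_diag_mx; apply/rowP => j; rewrite !mxE //.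
have zne : z != 0.
  apply/eqP => z0; have := congr1 (fun M : 'M[C]_n.+1 => M j0 j0) PPt; rewrite !mxE eqxx /=.
  rewrite big1; first by move=> /eqP; rewrite eq_sym oner_eq0.
  move=> l _; have : z 0 l = 0 by rewrite z0 mxE.
  by rewrite mxE => ->; rewrite mul0r.
pose zr := z ^ cRe; pose zi := z ^ cIm.
have zrA : zr *m A = m *: zr.
  apply/rowP => j; rewrite !mxE.
  have := congr1 (fun M : 'rV[C]_n.+1 => cRe (M 0 j)) zA; rewrite /= !mxE Re_sum /= => Hj.
  have -> : m * cRe (P j0 j) = cRe (D 0 j0 * P j0 j) by rewrite (Dj j0) Re_Rmul.
  rewrite -Hj; apply: eq_bigr => l _; rewrite !mxE Re_mulR //.
have ziA : zi *m A = m *: zi.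
  apply/rowP => j; rewrite !mxE.
  have := congr1 (fun M : 'rV[C]_n.+1 => cIm (M 0 j)) zA; rewrite /= !mxE Im_sum /= => Hj.
  have -> : m * cIm (P j0 j) = cIm (D 0 j0 * P j0 j) by rewrite (Dj j0) Im_Rmul.
  rewrite -Hj; apply: eq_bigr => l _; rewrite !mxE Im_mulR //.
have eig : forall r : 'rV[R]_n.+1, r *m A = m *: r -> A *m r^T = m *: r^T.
  by move=> r Hr; rewrite -{1}HA -trmx_mul Hr linearZ.
exists m.
have [zr0|zrn] := eqVneq zr 0.
  have [zi0|zin] := eqVneq zi 0.
    exfalso; move/negP: zne; apply; apply/eqP/rowP => j.
    have h1 : zr 0 j = 0 by rewrite zr0 mxE.
    have h2 : zi 0 j = 0 by rewrite zi0 mxE.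
    move: h1 h2; rewrite !mxE; case: (P j0 j) => a b /= -> -> //.
  exists zi^T; split; first by rewrite trmx_eq0.
  by split; [exact: eig | exact: ray].
exists zr^T; split; first by rewrite trmx_eq0.
by split; [exact: eig | exact: ray].
Qed.
End SpecS.


Definition ip {R : rcfType} {d : nat} (x y : 'cV[R]_d) : R := (x^T *m y) 0 0.

Lemma ipE (R : rcfType) d (x y : 'cV[R]_d) : ip x y = \sum_i x i 0 * y i 0.
Proof. by rewrite /ip !mxE; apply: eq_bigr => i _; rewrite mxE. Qed.

Lemma ipC (R : rcfType) d (x y : 'cV[R]_d) : ip x y = ip y x.
Proof. by rewrite !ipE; apply: eq_bigr => i _; rewrite mulrC. Qed.

Lemma ipDl (R : rcfType) d (x y z : 'cV[R]_d) : ip (x + y) z = ip x z + ip y z.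
Proof. by rewrite !ipE -big_split; apply: eq_bigr => i _; rewrite mxE mulrDl. Qed.

Lemma ipBl (R : rcfType) d (x y z : 'cV[R]_d) : ip (x - y) z = ip x z - ip y z.
Proof. by rewrite !ipE -sumrB; apply: eq_bigr => i _; rewrite !mxE mulrBl. Qed.

Lemma ipZl (R : rcfType) d (a : R) (x z : 'cV[R]_d) : ip (a *: x) z = a * ip x z.
Proof. by rewrite !ipE mulr_sumr; apply: eq_bigr => i _; rewrite mxE mulrA. Qed.

Lemma ip_suml (R : rcfType) d (I : Type) (r : seq I) (P : pred I) (F : I -> 'cV[R]_d) z :
  ip (\sum_(i <- r | P i) F i) z = \sum_(i <- r | P i) ip (F i) z.
Proof.
apply: (big_rec2 (fun a b => ip b z = a)).
  by rewrite ipE big1 // => i _; rewrite mxE mul0r.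
by move=> i a b _ <-; rewrite ipDl.
Qed.

Lemma ipDr (R : rcfType) d (x y z : 'cV[R]_d) : ip z (x + y) = ip z x + ip z y.
Proof. by rewrite !(ipC z) ipDl. Qed.
Lemma ipBr (R : rcfType) d (x y z : 'cV[R]_d) : ip z (x - y) = ip z x - ip z y.
Proof. by rewrite !(ipC z) ipBl. Qed.
Lemma ipZr (R : rcfType) d (a : R) (x z : 'cV[R]_d) : ip z (a *: x) = a * ip z x.
Proof. by rewrite !(ipC z) ipZl. Qed.
Lemma ip_sumr (R : rcfType) d (I : Type) (r : seq I) (P : pred I) (F : I -> 'cV[R]_d) z :
  ip z (\sum_(i <- r | P i) F i) = \sum_(i <- r | P i) ip z (F i).
Proof. rewrite ipC ip_suml; apply: eq_bigr => i _; exact: ipC. Qed.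

Lemma ip_mulmx (R : rcfType) d (M : 'M[R]_d) (x y : 'cV[R]_d) :
  ip x (M *m y) = ip (M^T *m x) y.
Proof. by rewrite /ip trmx_mul trmxK mulmxA. Qed.

Lemma ip_ge0 (R : rcfType) d (x : 'cV[R]_d) : 0 <= ip x x.
Proof. by rewrite ipE; apply: sumr_ge0 => i _; rewrite -expr2 sqr_ge0. Qed.

Lemma ip_eq0 (R : rcfType) d (x : 'cV[R]_d) : ip x x = 0 -> x = 0.
Proof.
rewrite ipE => /eqP; rewrite psumr_eq0 => [/allP H|i _]; last by rewrite -expr2 sqr_ge0.
apply/matrixP => i j; rewrite ord1 mxE.
have := H i (mem_index_enum i); rewrite mulf_eq0 orbb => /eqP //.
Qed.

Lemma norm2_ip (R : rcfType) d (x : 'cV[R]_d) : norm2 x = Num.sqrt (ip x x).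
Proof. by rewrite /norm2 ipE; congr Num.sqrt; apply: eq_bigr => i _; rewrite expr2. Qed.

Lemma norm2_sqr (R : rcfType) d (x : 'cV[R]_d) : norm2 x ^+ 2 = ip x x.
Proof. by rewrite norm2_ip sqr_sqrtr // ip_ge0. Qed.

Lemma CS (R : rcfType) d (x y : 'cV[R]_d) : ip x y ^+ 2 <= ip x x * ip y y.
Proof.
have [y0|yn] := eqVneq (ip y y) 0.
  rewrite (ip_eq0 y0); have -> : ip x 0 = 0 by rewrite ipE big1 // => i _; rewrite mxE mulr0.
  by rewrite expr0n /= mulr_ge0 // ip_ge0.
have yp : 0 < ip y y by rewrite lt_neqAle eq_sym yn ip_ge0.
pose t := ip x y / ip y y.
have := ip_ge0 (x - t *: y).
rewrite ipBl !ipBr !ipZl !ipZr (ipC y x) /t => H.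
rewrite -subr_ge0.
have -> : ip x x * ip y y - ip x y ^+ 2 =
   ip y y * (ip x x - ip x y / ip y y * ip x y -
     (ip x y / ip y y * ip x y - ip x y / ip y y * (ip x y / ip y y * ip y y))).
  by field; rewrite yn.
by rewrite mulr_ge0 // ltW.
Qed.

Lemma abs_le_sqr (R : rcfType) (a b : R) : 0 <= b -> a ^+ 2 <= b ^+ 2 -> `|a| <= b.
Proof.
move=> hb h; rewrite -(ler_pXn2r (n := 2)) ?nnegrE ?normr_ge0 //.
by rewrite real_normK ?num_real.
Qed.


Lemma sum_split3 (R : rcfType) (d k : nat) (F : nat -> R) : (k < d)%N ->
  \sum_(i < d) F i = \sum_(i < k) F i + F k + \sum_(k.+1 <= i < d) F i.
Proof.
move=> hk; rewrite -(big_mkord xpredT F) (big_cat_nat _ (n:=k)) //=; last exact: ltnW.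
by rewrite big_mkord (big_ltn hk) addrA.
Qed.

Lemma final_num (R : rcfType) (s G E c0 : R) :
  0 <= s -> 0 < G -> 0 <= E -> 4 * E <= G -> 1 <= c0 ->
  (G ^+ 2 - E ^+ 2) * s <= 2 * G * E ->
  2 * s ^+ 2 <= (4 * c0 / G * E) ^+ 2.
Proof.
move=> s0 G0 E0 EG c1 H.
have h1 : 15 * (s * G) <= 32 * E.
  have h0 : 16 * E ^+ 2 <= G ^+ 2 by nra.
  have h0' : 16 * E ^+ 2 * s <= G ^+ 2 * s by nra.
  have h2 : 15 * G ^+ 2 * s <= 16 * (2 * G * E) by nra.
  have : G * (15 * (s * G)) <= G * (32 * E) by nra.
  by rewrite ler_pM2l.
have sG0 : 0 <= s * G by apply: mulr_ge0 => //; apply: ltW.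
have h4 : 225 * (s * G) ^+ 2 <= 1024 * E ^+ 2 by nra.
have h6 : 1 <= c0 ^+ 2 by nra.
have h5 : E ^+ 2 <= c0 ^+ 2 * E ^+ 2.
  by rewrite -{1}(mul1r (E ^+ 2)); apply: ler_wpM2r => //; apply: sqr_ge0.
have h3 : 2 * (s * G) ^+ 2 <= (4 * c0 * E) ^+ 2 by nra.
have -> : 4 * c0 / G * E = (4 * c0 * E) / G by rewrite mulrAC.
rewrite expr_div_n ler_pdivlMr ?exprn_gt0 //.
have -> : 2 * s ^+ 2 * G ^+ 2 = 2 * (s * G) ^+ 2 by ring.
exact: h3.
Qed.

Lemma final_alg (R : rcfType) (d k : nat) (lam al q ga eps : nat -> R) (c0 : R) :
  (k.+1 < d)%N ->
  (forall i j, (i <= j)%N -> (j < d)%N -> lam j <= lam i) ->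
  0 <= lam k.+1 ->
  lam k.+1 < lam k ->
  \sum_(i < d) al i ^+ 2 = 1 ->
  0 <= al k ->
  (forall j, (j < k)%N -> lam j * (1 - eps j ^+ 2) <= q j) ->
  (forall j, (j < k)%N -> `|ga j - al j| <= eps j) ->
  (forall j, (j < k)%N -> 0 <= eps j) ->
  1 < c0 ->
  \sum_(j < k) lam j * eps j <= (c0 - 1) / (4 * c0) * (lam k - lam k.+1) ->
  lam k <= \sum_(i < d) lam i * al i ^+ 2 - \sum_(j < k) q j * ga j ^+ 2 ->
  Num.sqrt (2 - 2 * al k) <= 4 * c0 / (lam k - lam k.+1) * \sum_(j < k) lam j * eps j.
Proof.
move=> Hk Hdec Hl1 Hl Hsum Hak Hq Hga Heps Hc0 HE Hkey.
set G := lam k - lam k.+1; set E := \sum_(j < k) lam j * eps j.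
have G0 : 0 < G by rewrite subr_gt0.
have lkG : G <= lam k by rewrite /G lerBlDr lerDl.
have hkd : (k < d)%N by apply: ltnW.
have lamj j : (j < k)%N -> lam k <= lam j by move=> hj; apply: Hdec => //; apply: ltnW.
have lami i : (k.+1 <= i)%N -> (i < d)%N -> lam i <= lam k.+1 by move=> h1 h2; apply: Hdec.
have E0 : 0 <= E.
  apply: sumr_ge0 => j _; apply: mulr_ge0; last exact: Heps.
  by apply: le_trans Hl1 _; apply: le_trans (ltW Hl) _; apply: lamj.
have E4 : 4 * E <= G.
  have c0p : 0 < c0 by apply: lt_trans Hc0.
  have r : (c0 - 1) / (4 * c0) <= 1 / 4.
    rewrite ler_pdivrMr ?mulr_gt0 //.
    have -> : 1 / 4 * (4 * c0) = c0 by field.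
    by rewrite gerBl.
  have : E <= 1 / 4 * G.
    by apply: le_trans HE _; rewrite ler_pM2r.
  move=> h; have h' : 4 * E <= 4 * (1 / 4 * G) by rewrite ler_pM2l.
  apply: le_trans h' _; rewrite mulrA.
  have -> : 4 * (1 / 4) = 1 :> R by field.
  by rewrite mul1r.
have ljE j : (j < k)%N -> lam j * eps j <= E.
  move=> hj; rewrite /E (bigD1 (Ordinal hj)) //= lerDl.
  apply: sumr_ge0 => i _; apply: mulr_ge0; last exact: Heps.
  by apply: le_trans Hl1 _; apply: le_trans (ltW Hl) _; apply: lamj.
have term j : (j < k)%N -> G * ((lam j - lam k) * al j ^+ 2 - q j * ga j ^+ 2)
    <= - (G ^+ 2 - E ^+ 2) * al j ^+ 2 + 2 * G * (lam j * eps j) * `|al j|.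
  move=> hj.
  have lj := lamj j hj; have ej := Heps j hj; have hq := Hq j hj; have hg := Hga j hj.
  have lE := ljE j hj.
  have lp : 0 < lam j by apply: lt_le_trans lj; apply: lt_le_trans G0 lkG.
  have eps1 : eps j <= 1.
    have h1 : G * eps j <= lam j * eps j.
      by apply: ler_wpM2r => //; apply: le_trans lkG lj.
    have h2 : G * eps j <= G by nra.
    by rewrite -(ler_pM2l G0) mulr1.
  set p := lam j * (1 - eps j ^+ 2).
  have p0 : 0 <= p by apply: mulr_ge0; [exact: ltW | nra].
  have p1 : p <= lam j by rewrite /p ler_piMr ?(ltW lp) // gerBl sqr_ge0.
  have hs : al j ^+ 2 - 2 * `|al j| * eps j <= ga j ^+ 2.
    have -> : ga j = al j + (ga j - al j) by rewrite addrC subrK.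
    have ha : - (`|al j| * `|ga j - al j|) <= al j * (ga j - al j).
      by rewrite -normrM lerNnormlW.
    have hb : `|al j| * `|ga j - al j| <= `|al j| * eps j by apply: ler_wpM2l.
    have hc : 0 <= (ga j - al j) ^+ 2 by apply: sqr_ge0.
    rewrite sqrrD; nra.
  have hqg : p * ga j ^+ 2 <= q j * ga j ^+ 2 by apply: ler_wpM2r => //; apply: sqr_ge0.
  have hpg : p * (al j ^+ 2 - 2 * `|al j| * eps j) <= p * ga j ^+ 2 by apply: ler_wpM2l.
  have hpl : p * (`|al j| * eps j) <= lam j * (`|al j| * eps j).
    by apply: ler_wpM2r => //; apply: mulr_ge0.
  have t1 : (lam j - lam k) * al j ^+ 2 - q j * ga j ^+ 2 <=
      (lam j * eps j ^+ 2 - lam k) * al j ^+ 2 + 2 * (lam j * eps j) * `|al j|.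
    rewrite /p in hpg hpl hqg; nra.
  have t2 : G * (lam j * eps j ^+ 2) <= E ^+ 2.
    have : G * (lam j * eps j ^+ 2) <= lam j * (lam j * eps j ^+ 2).
      by apply: ler_wpM2r; [apply: mulr_ge0; [exact: ltW|exact: sqr_ge0] | exact: le_trans lkG lj].
    move=> h; apply: le_trans h _.
    have -> : lam j * (lam j * eps j ^+ 2) = (lam j * eps j) ^+ 2 by ring.
    rewrite ler_sqr ?nnegrE //; apply: mulr_ge0 => //; exact: ltW.
  have t3 : G ^+ 2 <= G * lam k by rewrite expr2 ler_pM2l.
  have a0 : 0 <= al j ^+ 2 by apply: sqr_ge0.
  have t4 : G * ((lam j * eps j ^+ 2 - lam k) * al j ^+ 2) <= - (G ^+ 2 - E ^+ 2) * al j ^+ 2.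
    nra.
  have := ler_wpM2l (ltW G0) t1; nra.
set P := \sum_(k.+1 <= i < d) al i ^+ 2.
set Q := \sum_(j < k) al j ^+ 2.
have P0 : 0 <= P by apply: sumr_ge0 => i _; apply: sqr_ge0.
have Q0 : 0 <= Q by apply: sumr_ge0 => i _; apply: sqr_ge0.
have HT : Q + al k ^+ 2 + P = 1 by rewrite -Hsum (sum_split3 (fun i => al i ^+ 2) hkd).
set T := P + Q.
set sg := Num.sqrt T.
have T0 : 0 <= T by apply: addr_ge0.
have sg0 : 0 <= sg by apply: sqrtr_ge0.
have sgT : sg ^+ 2 = T by rewrite sqr_sqrtr.
have alj j : (j < k)%N -> `|al j| <= sg.
  move=> hj; rewrite -sqrtr_sqr ler_sqrt //.
  have QT : Q <= P + Q by rewrite lerDr.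
  apply: le_trans QT; rewrite /Q (bigD1 (Ordinal hj)) //= lerDl.
  by apply: sumr_ge0 => i _; apply: sqr_ge0.
have K0 : 0 <= \sum_(i < d) (lam i - lam k) * al i ^+ 2 - \sum_(j < k) q j * ga j ^+ 2.
  have -> : \sum_(i < d) (lam i - lam k) * al i ^+ 2 =
      \sum_(i < d) lam i * al i ^+ 2 - lam k.
    rewrite -{2}[lam k]mulr1 -Hsum mulr_sumr -sumrB.
    by apply: eq_bigr => i _; rewrite mulrBl.
  by rewrite subr_ge0 lerBrDr addrC -lerBrDr.
rewrite (sum_split3 (fun i => (lam i - lam k) * al i ^+ 2) hkd) subrr mul0r addr0 in K0.
have KP : \sum_(k.+1 <= i < d) (lam i - lam k) * al i ^+ 2 <= - (G * P).
  rewrite /P mulr_sumr -sumrN; apply: ler_sum_nat => i /andP [h1 h2].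
  rewrite -mulNr; apply: ler_wpM2r; first by apply: sqr_ge0.
  by rewrite /G opprB lerD2r lami.
have KQ : G * (\sum_(j < k) (lam j - lam k) * al j ^+ 2 - \sum_(j < k) q j * ga j ^+ 2)
    <= - (G ^+ 2 - E ^+ 2) * Q + 2 * G * (E * sg).
  rewrite -sumrB mulr_sumr /Q mulr_sumr.
  have hE : \sum_(j < k) 2 * G * (lam j * eps j) * `|al j| <= 2 * G * (E * sg).
    rewrite /E mulr_suml mulr_sumr; apply: ler_sum => j _.
    rewrite -mulrA; apply: ler_wpM2l; first by apply: mulr_ge0 => //; apply: ltW.
    apply: ler_wpM2l; last exact: alj.
    apply: mulr_ge0; last exact: Heps.
    by apply: le_trans Hl1 _; apply: le_trans (ltW Hl) _; apply: lamj.
  apply: le_trans (lerD (lexx _) hE); rewrite -big_split /=.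
  by apply: ler_sum => j _; exact: term (ltn_ord j).
have main : (G ^+ 2 - E ^+ 2) * sg ^+ 2 <= 2 * G * E * sg.
  rewrite sgT /T.
  have hg : G * (\sum_(j < k) (lam j - lam k) * al j ^+ 2 +
      \sum_(k.+1 <= i < d) (lam i - lam k) * al i ^+ 2 - \sum_(j < k) q j * ga j ^+ 2) >= 0.
    by apply: mulr_ge0 => //; apply: ltW.
  have E2 : 0 <= E ^+ 2 * P by apply: mulr_ge0 => //; apply: sqr_ge0.
  have hKP := ler_wpM2l (ltW G0) KP.
  nra.
have main' : (G ^+ 2 - E ^+ 2) * sg <= 2 * G * E.
  have [sgz|sgp] := eqVneq sg 0.
    by rewrite sgz mulr0; apply: mulr_ge0 => //; apply: mulr_ge0 => //; apply: ltW.
  have sgp' : 0 < sg by rewrite lt_neqAle eq_sym sgp sg0.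
  by rewrite -(ler_pM2r sgp'); move: main; rewrite expr2 mulrA.
have fin := final_num sg0 G0 E0 E4 (ltW Hc0) main'.
have ak2 : al k ^+ 2 <= 1 by lra.
have ak1 : al k <= 1 by nra.
have ak3 : al k ^+ 2 <= al k by nra.
have h2 : 2 - 2 * al k <= 2 * sg ^+ 2 by rewrite sgT /T; lra.
rewrite -[X in _ <= X]ger0_norm; last first.
  apply: mulr_ge0 => //; apply: mulr_ge0; first by apply: mulr_ge0 => //; apply: ltW; apply: lt_trans Hc0.
  by rewrite invr_ge0 ltW.
rewrite -sqrtr_sqr ler_sqrt; last by apply: sqr_ge0.
exact: le_trans h2 fin.
Qed.



Lemma expansion (R : rcfType) d (e : nat -> 'cV[R]_d)
  (Horth : forall i j : nat, (i < d)%N -> (j < d)%N ->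
     ((e i)^T *m e j) 0 0 = (i == j)%:R)
  (x : 'cV[R]_d) : x = \sum_(i < d) ip (e i) x *: e i.
Proof.
pose E : 'M[R]_d := \matrix_(r, c) (e c r 0).
have EtE : E^T *m E = 1%:M.
  apply/matrixP => i j; rewrite !mxE.
  rewrite -(Horth i j (ltn_ord i) (ltn_ord j)) !mxE.
  by apply: eq_bigr => r _; rewrite !mxE.
have EEt : E *m E^T = 1%:M by apply: mulmx1C.
transitivity (E *m (E^T *m x)); first by rewrite mulmxA EEt mul1mx.
apply/matrixP => r c; rewrite ord1 !mxE summxE.
apply: eq_bigr => i _; rewrite !mxE ipE mulrC; congr (_ * _).
by apply: eq_bigr => l _; rewrite !mxE.
Qed.

Lemma test_vec (R : rcfType) d k (e v : nat -> 'cV[R]_d)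
  (Horth : forall i j : nat, (i < d)%N -> (j < d)%N ->
     ((e i)^T *m e j) 0 0 = (i == j)%:R)
  (Hk : (k < d)%N) :
  exists z : 'cV[R]_d, z != 0 /\ (forall j, (j < k)%N -> ip (v j) z = 0) /\
     (forall i, (i < d)%N -> (k < i)%N -> ip (e i) z = 0).
Proof.
pose M : 'M[R]_(k.+1, k) := \matrix_(i, j) ip (v j) (e i).
have kn : kermx M != 0.
  rewrite -mxrank_eq0 mxrank_ker.
  have := rank_leq_col M; rewrite subn_eq0 -ltnNge; lia.
have [r rn] : exists r, row r (kermx M) != 0.
  case: (pickP (fun r => row r (kermx M) != 0)) => [r rn|H]; first by exists r.
  exfalso; move/negP: kn; apply; apply/eqP/row_matrixP => i.
  by rewrite row0; apply/eqP; have := H i; rewrite /= => /negbFE.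
pose b := row r (kermx M).
have bM : b *m M = 0 by rewrite /b -row_mul mulmx_ker row0.
pose z := \sum_(i < k.+1) b 0 i *: e i.
have ez i : (i < d)%N -> ip (e i) z = \sum_(l < k.+1) b 0 l * (i == l)%:R.
  move=> hi; rewrite /z ip_sumr; apply: eq_bigr => l _; rewrite ipZr /ip Horth //.
  by apply: leq_trans (ltn_ord l) Hk.
exists z; split; last split.
- have [i0 bi0] : exists i, b 0 i != 0.
    case: (pickP (fun i => b 0 i != 0)) => [i hi|H]; first by exists i.
    exfalso; move/negP: rn; apply; apply/eqP/rowP => i.
    by rewrite [RHS]mxE; apply/eqP; have := H i; rewrite /= => /negbFE.
  apply/negP => /eqP z0; move/negP: bi0; apply.
  have := ez i0 (leq_trans (ltn_ord i0) Hk).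
  rewrite z0 (bigD1 i0) //= eqxx mulr1 big1 ?addr0.
    by move=> <-; rewrite ipE big1 // => l _; rewrite mxE mulr0.
  by move=> l hl; have /negbTE h : (l : nat) != i0 := hl; rewrite eq_sym h mulr0.
- move=> j hj; rewrite /z ip_sumr.
  have h : (b *m M) 0 (Ordinal hj) = 0 by rewrite bM mxE.
  transitivity ((b *m M) 0 (Ordinal hj)); last exact: h.
  by rewrite mxE; apply: eq_bigr => l _; rewrite ipZr [M _ _]mxE.
- move=> i hi hki; rewrite ez // big1 // => l _.
  have -> : (i == l) = false by apply/negbTE; rewrite neq_ltn; have := ltn_ord l; lia.
  by rewrite mulr0.
Qed.


Lemma rayleigh' (R : rcfType) n (A : 'M[R]_n) : (0 < n)%N -> A^T = A ->
  exists m (w : 'cV[R]_n), w != 0 /\ A *m w = m *: w /\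
    forall x : 'cV[R]_n, (x^T *m A *m x) 0 0 <= m * (x^T *m x) 0 0.
Proof. by case: n A => // n A _; apply: rayleigh. Qed.

Theorem lemma2 (R : rcfType) (d : nat) (S : 'M[R]_d)
  (lam : nat -> R) (ustar : nat -> 'cV[R]_d)
  (HsymS : S^T = S)
  (HpsdS : forall x : 'cV[R]_d, 0 <= qform S x)
  (Heig : forall i : nat, (i < d)%N -> S *m ustar i = lam i *: ustar i)
  (Horth : forall i j : nat, (i < d)%N -> (j < d)%N ->
     ((ustar i)^T *m ustar j) 0 0 = (i == j)%:R)
  (Hlam1 : lam 0%N = 1)
  (Hdec : forall i : nat, (i.+1 < d)%N -> lam i.+1 < lam i)
  (k : nat) (Hk : (k.+1 < d)%N)
  (v : nat -> 'cV[R]_d)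
  (Hv : forall k' : nat, (k' < k)%N -> norm2 (v k') = 1)
  (u : 'cV[R]_d)
  (Hu : is_top_eigvec (deflate S v k) u)
  (Hsign : 0 <= ((u^T *m ustar k) 0 0))
  (c0 : R) (Hc0 : 1 < c0)
  (Herr : \sum_(k' < k) lam k' * norm2 (ustar k' - v k')
          <= (c0 - 1) / (4 * c0) * (lam k - lam k.+1)) :
  norm2 (u - ustar k)
    <= 4 * c0 / (lam k - lam k.+1) * \sum_(k' < k) lam k' * norm2 (ustar k' - v k').
Proof.
have d_gt0 : (0 < d)%N by lia.
case: Hu => Hun [mu [Hmu Hmax]].
have uu : ip u u = 1 by rewrite -norm2_sqr Hun expr1n.
have ee i : (i < d)%N -> ip (ustar i) (ustar i) = 1 by move=> hi; rewrite /ip Horth // eqxx.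
have ipexp x y : ip x y = \sum_(i < d) ip (ustar i) x * ip (ustar i) y.
  by rewrite {1}(expansion Horth x) ip_suml; apply: eq_bigr => i _; rewrite ipZl.
have eS i x : (i < d)%N -> ip (ustar i) (S *m x) = lam i * ip (ustar i) x.
  by move=> hi; rewrite ip_mulmx HsymS Heig // ipZl.
have qf x : qform S x = ip x (S *m x) by rewrite /qform /ip mulmxA.
have lam_ge0 i : (i < d)%N -> 0 <= lam i.
  by move=> hi; have := HpsdS (ustar i); rewrite qf Heig // ipZr ee // mulr1.
have lam_dec : forall i j, (i <= j)%N -> (j < d)%N -> lam j <= lam i.
  move=> i j; elim: j => [|j IH] hij hj.
    by rewrite leqn0 in hij; move/eqP: hij => ->.
  rewrite leq_eqVlt in hij; case/orP: hij => [/eqP -> //| hij].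
  exact: le_trans (ltW (Hdec j hj)) (IH hij (ltnW hj)).
set A := deflate S v k in Hmu Hmax.
have Av x : A *m x = S *m x - \sum_(j < k) (qform S (v j) * ip (v j) x) *: v j.
  rewrite /A /deflate mulmxBl mulmx_suml; congr (_ - _); apply: eq_bigr => j _.
  by rewrite -scalemxAl -mulmxA (mx11_scalar ((v j)^T *m x)) mul_mx_scalar scalerA.
have Asym : A^T = A.
  rewrite /A /deflate linearB /= linear_sum /= HsymS; congr (_ - _).
  by apply: eq_bigr => j _; rewrite linearZ /= trmx_mul trmxK.
have mu_ge : lam k <= mu.
  have [m [w [wn [Aw ray]]]] := rayleigh' d_gt0 Asym.
  have mle := Hmax m w wn Aw.
  have [z [zn [zv ze]]] := test_vec v Horth (ltnW Hk).
  have Az : A *m z = S *m z.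
    by rewrite Av big1 ?subr0 // => j _; rewrite zv // mulr0 scale0r.
  have zz : 0 < ip z z.
    rewrite lt_neqAle ip_ge0 andbT eq_sym; apply/eqP => /ip_eq0 z0.
    by move/negP: zn; apply; rewrite z0.
  have h := ray z; rewrite -mulmxA Az in h.
  have h2 : lam k * ip z z <= ip z (S *m z).
    rewrite [ip z (S *m z)]ipexp [ip z z]ipexp mulr_sumr; apply: ler_sum => i _.
    rewrite eS // !(mulrCA (ip (ustar i) z)).
    case: (leqP i k) => hik.
      apply: ler_wpM2r; first by rewrite -expr2 sqr_ge0.
      exact: lam_dec hik (ltnW Hk).
    by rewrite ze // !mul0r !mulr0.
  have h3 : lam k <= m by rewrite -(ler_pM2r zz); apply: le_trans h2 h.
  exact: le_trans h3 mle.
have mu_eq : mu = ip u (A *m u) by rewrite Hmu ipZr uu mulr1.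
have key : lam k <= \sum_(i < d) lam i * (ip (ustar i) u) ^+ 2
    - \sum_(j < k) qform S (v j) * (ip (v j) u) ^+ 2.
  move: mu_ge; rewrite mu_eq Av ipBr ip_sumr.
  have -> : ip u (S *m u) = \sum_(i < d) lam i * (ip (ustar i) u) ^+ 2.
    by rewrite ipexp; apply: eq_bigr => i _; rewrite eS // mulrCA expr2.
  congr (_ <= _ - _); apply: eq_bigr => j _.
  by rewrite ipZr (ipC u) expr2 mulrA.
have vv j : (j < k)%N -> ip (v j) (v j) = 1.
  by move=> hj; rewrite -norm2_sqr Hv // expr1n.
have hjd j : (j < k)%N -> (j < d)%N by move=> hj; lia.
have Hq j : (j < k)%N -> lam j * (1 - norm2 (ustar j - v j) ^+ 2) <= qform S (v j).
  move=> hj; have hd := hjd j hj.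
  have h1 := HpsdS (v j - ustar j).
  rewrite qf mulmxBr Heig // !ipBl !ipBr in h1.
  set c := ip (ustar j) (v j).
  have e1 : ip (v j) (lam j *: ustar j) = lam j * c by rewrite ipZr ipC.
  have e2 : ip (ustar j) (S *m v j) = lam j * c by rewrite eS.
  have e3 : ip (ustar j) (lam j *: ustar j) = lam j by rewrite ipZr ee // mulr1.
  rewrite e1 e2 e3 -qf in h1.
  have e4 : ip (ustar j - v j) (ustar j - v j) = 2 - 2 * c.
    rewrite !ipBl !ipBr ee // vv // (ipC (v j) (ustar j)) -/c; ring.
  rewrite norm2_sqr e4; lra.
have Hga j : (j < k)%N -> `|ip (v j) u - ip (ustar j) u| <= norm2 (ustar j - v j).
  move=> hj; apply: abs_le_sqr; first exact: sqrtr_ge0.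
  rewrite norm2_sqr.
  have -> : ip (v j) u - ip (ustar j) u = - ip (ustar j - v j) u by rewrite ipBl opprB.
  rewrite sqrrN; have := CS (ustar j - v j) u; rewrite uu mulr1 //.
have Heps j : (j < k)%N -> 0 <= norm2 (ustar j - v j) by move=> _; exact: sqrtr_ge0.
have Hsum : \sum_(i < d) ip (ustar i) u ^+ 2 = 1.
  by rewrite -uu [RHS]ipexp; apply: eq_bigr => i _; rewrite expr2.
have Hak : 0 <= ip (ustar k) u by rewrite ipC.
have := final_alg (lam := lam) (al := fun i => ip (ustar i) u)
  (q := fun j => qform S (v j)) (ga := fun j => ip (v j) u)
  (eps := fun j => norm2 (ustar j - v j)) Hk lam_dec (lam_ge0 _ Hk) (Hdec _ Hk)
  Hsum Hak Hq Hga Heps Hc0 Herr key.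
have -> : 2 - 2 * ip (ustar k) u = ip (u - ustar k) (u - ustar k).
  rewrite !ipBl !ipBr uu ee; last by lia.
  rewrite (ipC u (ustar k)); ring.
by rewrite -norm2_ip.
Qed.
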